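(* Let $p$ be a prime, $R$ a Noetherian $\mathbb{F}_p$-algebra and $(\sigma,\delta)$ a skew derivation on $R$ with $\sigma\delta=\delta\sigma$. If $i,j,k,n\in\mathbb{N}$ satisfy $[i]+[j]+[k]=[n]$, then $i+j+k=n$. Furthermore, for any $a,b,x\in R$ and $n\in\mathbb{N}$, there exist $\alpha_{i,j,k}\in\mathbb{F}_p^\times$ such that $$\delta^n(axb)=\sum_{[i]+[j]+[k]=[n]}\alpha_{i,j,k}\,\delta^i\sigma^{n-i}(a)\,\delta^j\sigma^k(x)\,\delta^k(b).$$
   Context: A skew derivation is a pair $(\sigma,\delta)$ with $\sigma$ an automorphism and $\delta(ab)=\delta(a)b+\sigma(a)\delta(b)$; composition is written as concatenation. For $n\in\mathbb{N}$ with base-$p$ expansion $n=a_0+a_1p+\cdots+a_rp^r$ ($0\le a_i<p$), $[n]=[n]_p$ denotes the sequence $(a_0,a_1,\dots)\in\mathbb{N}^\infty$ with $a_i=0$ for $i>r$; sums $[i]+[j]+[k]$ are taken componentwise, and the sum in the formula runs over all triples $(i,j,k)$ with $[i]+[j]+[k]=[n]$. *)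

(* Defs.v *)
From HB Require Import structures.
From mathcomp Require Import all_boot all_order all_algebra.
From mathcomp Require Import zify.
Set Implicit Arguments. Unset Strict Implicit. Unset Printing Implicit Defensive.
Import Order.TTheory GRing.Theory Num.Theory.

Local Open Scope ring_scope.

Definition left_ideal (R : pzRingType) (I : R -> Prop) : Prop :=
  [/\ I 0, (forall x y, I x -> I y -> I (x + y)) & (forall r x, I x -> I (r * x))].

Definition right_ideal (R : pzRingType) (I : R -> Prop) : Prop :=
  [/\ I 0, (forall x y, I x -> I y -> I (x + y)) & (forall r x, I x -> I (x * r))].

Definition acc_on (R : Type) (C : (R -> Prop) -> Prop) : Prop :=
  forall I : nat -> R -> Prop,
    (forall m, C (I m)) ->
    (forall m x, I m x -> I m.+1 x) ->
    exists N, forall m, (N <= m)%N -> forall x, I m x <-> I N x.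

Definition noetherian (R : pzRingType) : Prop :=
  acc_on (@left_ideal R) /\ acc_on (@right_ideal R).

Definition skew_derivation (R : pzRingType) (sigma delta : R -> R) : Prop :=
  [/\ (forall x y, sigma (x + y) = sigma x + sigma y),
      (forall x y, sigma (x * y) = sigma x * sigma y),
      sigma 1 = 1 & bijective sigma] /\
  ((forall x y, delta (x + y) = delta x + delta y) /\
   (forall x y, delta (x * y) = delta x * y + sigma x * delta y)).

Local Close Scope ring_scope.

Definition digit (p n t : nat) : nat := (n %/ p ^ t) %% p.

(* [i] + [j] + [k] = [n] componentwise, as sequences in N^infinity *)
Definition digits_add (p i j k n : nat) : Prop :=
  forall t, digit p i t + digit p j t + digit p k t = digit p n t.

(* boolean decision of digits_add (only digits below i+j+k+n+1 can be nonzero) *)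
Definition digits_addb (p i j k n : nat) : bool :=
  all (fun t => digit p i t + digit p j t + digit p k t == digit p n t)
      (iota 0 (i + j + k + n).+1).

Lemma digit_big (p m t : nat) : 1 < p -> m <= t -> digit p m t = 0.
Proof.
move=> p1 mt; rewrite /digit divn_small ?mod0n //.
exact: leq_ltn_trans mt (ltn_expl t p1).
Qed.

Lemma digits_addP (p i j k n : nat) : 1 < p ->
  reflect (digits_add p i j k n) (digits_addb p i j k n).
Proof.
move=> p1; apply: (iffP allP) => [H t|H t _]; last exact/eqP.
case: (ltnP t (i + j + k + n).+1) => ht.
  by apply/eqP/H; rewrite mem_iota.
by rewrite !digit_big //; apply: leq_trans ht; lia.
Qed.

(* Main.v *)
Require Import Defs.
From HB Require Import structures.
From mathcomp Require Import all_boot all_order all_algebra zify.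
Set Implicit Arguments. Unset Strict Implicit. Unset Printing Implicit Defensive.
Section Arith.
Variable p : nat.
Hypothesis hp : 1 < p.

Lemma digit0 x : digit p x 0 = x %% p.
Proof. by rewrite /digit expn0 divn1. Qed.

Lemma digitS x t : digit p x t.+1 = digit p (x %/ p) t.
Proof. by rewrite /digit expnS divnMA. Qed.

Lemma digit_lt x t : digit p x t < p.
Proof. by rewrite /digit ltn_pmod //; lia. Qed.

Lemma modsplit x t : x %% p ^ t.+1 = x %% p ^ t + digit p x t * p ^ t.
Proof.
have d0 : 0 < p ^ t by rewrite expn_gt0; lia.
have e1 := divn_eq x (p ^ t).
have e2 := divn_eq (x %/ p ^ t) p.
have l1 := ltn_pmod x d0.
have l2 := digit_lt x t.
rewrite /digit in l2 *.
set q := x %/ p ^ t %/ p in e2; set r := x %/ p ^ t %% p in e2 l2 *.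
set s := x %% p ^ t in e1 l1 *.
have -> : x = q * p ^ t.+1 + (s + r * p ^ t).
  rewrite expnS {1}e1 e2; lia.
rewrite modnMDl modn_small // expnS; nia.
Qed.

Lemma add2 a b : (forall t, digit p a t + digit p b t < p) ->
  forall t, digit p (a + b) t = digit p a t + digit p b t.
Proof.
move=> H t; elim: t a b H => [|t IH] a b H.
  have := H 0; rewrite !digit0 => h.
  by rewrite -modnDm modn_small.
rewrite !digitS divnD; last lia.
have h := H 0; rewrite !digit0 in h; rewrite leqNgt h addn0.
by apply: IH => u; rewrite -!digitS.
Qed.

Lemma add3 i j k : (forall t, digit p i t + digit p j t + digit p k t < p) ->
  forall t, digit p (i + j + k) t = digit p i t + digit p j t + digit p k t.
Proof.
move=> H t.
have Hij : forall t, digit p (i + j) t = digit p i t + digit p j t.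
  by apply: add2 => u; have := H u; lia.
rewrite add2 ?Hij // => u; rewrite Hij; exact: H.
Qed.

Lemma digits_eq x y : (forall t, digit p x t = digit p y t) -> x = y.
Proof.
move=> H.
have M : forall t, x %% p ^ t = y %% p ^ t.
  by elim=> [|t IH]; rewrite ?expn0 ?modn1 // !modsplit IH H.
have := M (x + y); rewrite !modn_small //.
  apply: leq_ltn_trans (ltn_expl _ hp); lia.
apply: leq_ltn_trans (ltn_expl _ hp); lia.
Qed.

Lemma part1 i j k n : digits_add p i j k n -> i + j + k = n.
Proof.
move=> H; apply: digits_eq => t; rewrite add3 ?H // => u; rewrite H.
exact: digit_lt.
Qed.

Definition S3 i j k t := i %% p ^ t + j %% p ^ t + k %% p ^ t.

Lemma nc_fwd i j k n : digits_add p i j k n -> forall t, S3 i j k t < p ^ t.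
Proof.
move=> H; elim=> [|t IH]; first by rewrite /S3 expn0 !modn1.
move: IH; rewrite /S3 !modsplit => IH.
have := H t; have := digit_lt n t; rewrite expnS; nia.
Qed.

Lemma nc_bwd i j k : (forall t, S3 i j k t < p ^ t) -> digits_add p i j k (i + j + k).
Proof.
move=> H t; rewrite add3 // => u.
have := H u.+1; rewrite /S3 !modsplit expnS.
have : 0 < p ^ u by rewrite expn_gt0; lia.
nia.
Qed.


Lemma legendre_w m N : prime p -> m <= N ->
  logn p m`! = \sum_(1 <= t < N.+1) m %/ p ^ t.
Proof.
move=> pp mN; rewrite logn_fact // [RHS](big_cat_nat _ (n := m.+1)) //=.
rewrite -[LHS]addn0; congr (_ + _); symmetry.
rewrite big_nat_cond big1 // => t /andP[/andP[ht _] _].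
apply: divn_small; apply: leq_trans (ltn_expl _ hp); lia.
Qed.

Lemma div3 i j k d : 0 < d ->
  (i + j + k) %/ d = i %/ d + j %/ d + k %/ d + (i %% d + j %% d + k %% d) %/ d.
Proof.
move=> d0.
have -> : i + j + k = (i %% d + j %% d + k %% d) + (i %/ d + j %/ d + k %/ d) * d.
  rewrite {1}(divn_eq i d) {1}(divn_eq j d) {1}(divn_eq k d); lia.
rewrite divnDMl //; lia.
Qed.

Lemma fact3 i j k :
  'C(i + j + k, i) * 'C(j + k, k) * (i`! * j`! * k`!) = (i + j + k)`!.
Proof.
have e1 := @bin_fact (i + j + k) i (leq_trans (leq_addr j i) (leq_addr k _)).
have e2 := @bin_fact (j + k) k (leq_addl j k).
have h1 : i + j + k - i = j + k by lia.
have h2 : j + k - k = j by lia.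
rewrite h1 in e1; rewrite h2 in e2.
rewrite -e1 -e2 -!mulnA; congr (_ * _); rewrite [RHS]mulnCA; congr (_ * _); by rewrite [j`! * _]mulnC.
Qed.

Lemma key i j k : prime p ->
  logn p ('C(i + j + k, i) * 'C(j + k, k)) =
  \sum_(1 <= t < (i + j + k).+1) S3 i j k t %/ p ^ t.
Proof.
move=> pp.
have c0 : 0 < 'C(i + j + k, i) * 'C(j + k, k).
  by rewrite muln_gt0 !bin_gt0; apply/andP; split; lia.
have := congr1 (logn p) (fact3 i j k).
rewrite !lognM ?muln_gt0 ?fact_gt0 //.
rewrite (@legendre_w (i + j + k) (i + j + k) pp (leqnn _)) (@legendre_w i (i + j + k)) //; last lia.
rewrite (@legendre_w j (i + j + k)) //; last lia.
rewrite (@legendre_w k (i + j + k)) //; last lia.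
have -> : \sum_(1 <= t < (i + j + k).+1) (i + j + k) %/ p ^ t =
  \sum_(1 <= t < (i + j + k).+1) (i %/ p ^ t) + \sum_(1 <= t < (i + j + k).+1) (j %/ p ^ t)
  + \sum_(1 <= t < (i + j + k).+1) (k %/ p ^ t) + \sum_(1 <= t < (i + j + k).+1) S3 i j k t %/ p ^ t.
  rewrite -!big_split /=; apply: eq_bigr => t _; rewrite div3 // expn_gt0; lia.
lia.
all: rewrite ?muln_gt0 ?bin_gt0; try (apply/andP; split); lia.
Qed.

Lemma KA i j k : prime p -> (forall t, S3 i j k t < p ^ t) ->
  ~~ (p %| 'C(i + j + k, i) * 'C(j + k, k)).
Proof.
move=> pp H; apply/negP => hd.
have c0 : 0 < 'C(i + j + k, i) * 'C(j + k, k).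
  by rewrite muln_gt0 !bin_gt0; apply/andP; split; lia.
have : 0 < logn p ('C(i + j + k, i) * 'C(j + k, k)).
  by rewrite logn_gt0 mem_primes pp c0 hd.
rewrite key // big1_seq //= => t _; exact: divn_small.
Qed.

Lemma KB i j k t : prime p -> p ^ t <= S3 i j k t ->
  p %| 'C(i + j + k, i) * 'C(j + k, k).
Proof.
move=> pp H.
have c0 : 0 < 'C(i + j + k, i) * 'C(j + k, k).
  by rewrite muln_gt0 !bin_gt0; apply/andP; split; lia.
have t0 : 0 < t by case: t H => //; rewrite /S3 expn0 !modn1.
have tN : t <= i + j + k.
  rewrite leqNgt; apply/negP => lt.
  have : S3 i j k t <= i + j + k by rewrite /S3; have := leq_mod i (p ^ t);
    have := leq_mod j (p ^ t); have := leq_mod k (p ^ t); lia.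
  have := ltn_expl t hp; lia.
have : 0 < logn p ('C(i + j + k, i) * 'C(j + k, k)).
  rewrite key // (big_cat_nat _ (n := t)) //= ?big_nat_recl //=; try lia.
  have : 0 < S3 i j k t %/ p ^ t by rewrite divn_gt0 // expn_gt0; lia.
  lia.
by rewrite logn_gt0 mem_primes => /and3P[].
Qed.

End Arith.

Section RingPart.
Import GRing.Theory.
Local Open Scope ring_scope.
Lemma pascal (V : zmodType) (T : nat -> V) n :
  \sum_(m < n.+1) T m *+ 'C(n, m) + \sum_(m < n.+1) T m.+1 *+ 'C(n, m) =
  \sum_(m < n.+2) T m *+ 'C(n.+1, m).
Proof.
rewrite [RHS]big_ord_recl [X in X + _]big_ord_recl /= !bin0 /bump.
under eq_bigr => i _ do rewrite leq0n add1n.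
under [in RHS]eq_bigr => i _ do rewrite leq0n add1n binS mulrnDr.
rewrite -addrA; congr (_ + _).
rewrite big_split /= [LHS]addrC [RHS]addrC; congr (_ + _).
by rewrite [RHS]big_ord_recr /= (bin_small (ltnSn n)) mulr0n addr0.
Qed.

Section Ring.
Variables (R : pzRingType) (sigma delta : R -> R).
Hypotheses (sD : forall x y, sigma (x + y) = sigma x + sigma y)
  (dD : forall x y, delta (x + y) = delta x + delta y)
  (dM : forall x y, delta (x * y) = delta x * y + sigma x * delta y)
  (cmm : forall x, sigma (delta x) = delta (sigma x)).

Lemma d0 : delta 0 = 0.
Proof. by apply: (addrI (delta 0)); rewrite -dD !addr0. Qed.

Lemma dMn x m : delta (x *+ m) = delta x *+ m.
Proof. by elim: m => [|m IH]; rewrite ?mulr0n ?d0 // !mulrS dD IH. Qed.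

Lemma scomm m x : sigma (iter m delta x) = iter m delta (sigma x).
Proof. by elim: m => //= m IH; rewrite cmm IH. Qed.

Lemma leib2 n a b : iter n delta (a * b) =
  \sum_(m < n.+1) (iter (n - m) delta (iter m sigma a) * iter m delta b) *+ 'C(n, m).
Proof.
elim: n => [|n IH]; first by rewrite big_ord1 /= mulr1n.
rewrite iterS IH (big_morph delta dD d0).
pose T m := iter (n.+1 - m) delta (iter m sigma a) * iter m delta b.
rewrite -(pascal T).
under eq_bigr => m _ do rewrite dMn dM mulrnDl.
rewrite big_split /=; congr (_ + _); apply: eq_bigr => m _; rewrite /T.
  by rewrite subSn ?iterS // -ltnS.
by rewrite subSS scomm.
Qed.

Lemma leib3 n a x b : iter n delta (a * x * b) =
  \sum_(m < n.+1) \sum_(k < m.+1)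
    (iter (n - m) delta (iter m sigma a) *
     (iter (m - k) delta (iter k sigma x) * iter k delta b)) *+ ('C(m, k) * 'C(n, m)).
Proof.
rewrite -mulrA leib2; apply: eq_bigr => m _.
rewrite leib2 mulr_sumr -sumrMnl; apply: eq_bigr => k _.
by rewrite mulrnAr mulrnA.
Qed.

End Ring.
End RingPart.

Unset Implicit Arguments. Set Strict Implicit.
Import Order.TTheory GRing.Theory Num.Theory.

Lemma sum_pick (V : zmodType) (G : nat -> V) (n s : nat) :
  (\sum_(j < n.+1 | (s + j == n)%N) G j)%R = if (s <= n)%N then G (n - s)%N else 0%R.
Proof.
case: leqP => h.
  rewrite (big_pred1 (inord (n - s))); first by rewrite inordK //; lia.
  move=> j /=; rewrite -(inj_eq val_inj) /= inordK; last lia.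
  by apply/eqP/eqP; lia.
by rewrite big_pred0 // => j; apply/eqP; lia.
Qed.

Lemma natr_dvd0 (R : pzRingType) p m : (p%:R : R)%R = 0%R -> p %| m -> (m%:R : R)%R = 0%R.
Proof. by move=> h /dvdnP[q ->]; rewrite natrM h mulr0. Qed.

Lemma natr_modp (R : pzRingType) p m : (p%:R : R)%R = 0%R -> ((m %% p)%:R : R)%R = (m%:R)%R.
Proof. by move=> h; rewrite {2}(divn_eq m p) natrD natrM h mulr0 add0r. Qed.

Lemma hd_lem p i j k n : 1 < p -> prime p -> i + j + k = n ->
  ~ digits_add p i j k n -> p %| 'C(n, i) * 'C(n - i, k).
Proof.
move=> hp pp e H; subst n.
have -> : i + j + k - i = j + k by lia.
apply/idPn => nd; apply: H; apply: (nc_bwd hp) => t.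
rewrite ltnNge; apply/negP => le.
by move/negP: nd; apply; exact: (KB hp pp le).
Qed.

Theorem lemma3p2p2 (p : nat) (R : pzRingType) (sigma delta : R -> R) :
  prime p -> (p%:R : R)%R = 0%R -> noetherian R ->
  skew_derivation sigma delta ->
  (forall x, sigma (delta x) = delta (sigma x)) ->
  (forall i j k n : nat, digits_add p i j k n -> i + j + k = n) /\
  (forall (n : nat) (a b x : R),
     exists alpha : nat -> nat -> nat -> 'F_p,
       (forall i j k : nat, digits_add p i j k n -> alpha i j k != 0%R) /\
       iter n delta (a * x * b)%R =
       (\sum_(i < n.+1) \sum_(j < n.+1) \sum_(k < n.+1 | digits_addb p i j k n)
          (nat_of_ord (alpha i j k))%:R
          * iter i delta (iter (n - i)%N sigma a)
          * iter j delta (iter k sigma x)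
          * iter k delta b)%R).
Proof.
move=> pp pR0 _ [[sD sM s1 sbij] [dD dM]] cmm.
have hp : 1 < p := prime_gt1 pp.
split; first by move=> i j k n H; exact (@part1 p hp i j k n H).
move=> n a b x.
pose c i k := 'C(n, i) * 'C(n - i, k).
exists (fun i j k => ((c i k)%:R)%R : 'F_p); split.
  move=> i j k H; have e := part1 hp H; subst n.
  rewrite /c; have -> : i + j + k - i = j + k by lia.
  apply/eqP => h; have := congr1 (@nat_of_ord _) h; rewrite val_Fp_nat //=.
  have := KA hp pp (nc_fwd hp H); rewrite /dvdn => /negP nd /eqP hd.
  exact: nd.
pose F i j k := (iter i delta (iter (n - i) sigma a) * iter j delta (iter k sigma x)
  * iter k delta b)%R.
have E1 : (\sum_(i < n.+1) \sum_(j < n.+1) \sum_(k < n.+1 | digits_addb p i j k n)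
          (nat_of_ord (((c i k)%:R)%R : 'F_p))%:R
          * iter i delta (iter (n - i)%N sigma a)
          * iter j delta (iter k sigma x)
          * iter k delta b)%R =
   (\sum_(i < n.+1) \sum_(k < n.+1)
      (if (i + k <= n)%N then (c i k)%:R * F i (n - i - k)%N k else 0))%R.
  apply: eq_bigr => i _.
  transitivity (\sum_(j < n.+1) \sum_(k < n.+1)
     (if (i + j + k == n)%N then (c i k)%:R * F i j k else 0))%R.
    apply: eq_bigr => j _; rewrite big_mkcond; apply: eq_bigr => k _.
    rewrite val_Fp_nat // (@natr_modp R p _ pR0).
    case: (@digits_addP p i j k n hp) => H.
      by rewrite (part1 hp H) eqxx /F !mulrA.
    case: eqP => e //.
    have hd : p %| c i k.
      exact: hd_lem hp pp e H.
    by rewrite (@natr_dvd0 R p _ pR0 hd) !mul0r.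
  rewrite exchange_big; apply: eq_bigr => k _.
  rewrite -big_mkcond /=.
  rewrite (eq_bigl (fun j : 'I_n.+1 => (i + k + j == n)%N)); last first.
    by move=> j /=; apply/eqP/eqP; lia.
  rewrite (sum_pick _ (fun j => (c i k)%:R * F i j k)%R) subnDA //.
rewrite E1 (leib3 dD dM cmm).
pose Hf m k := ((iter (n - m) delta (iter m sigma a) *
     (iter (m - k) delta (iter k sigma x) * iter k delta b)) *+ ('C(m, k) * 'C(n, m)))%R.
rewrite [LHS](eq_bigr (fun m : 'I_n.+1 => \sum_(k < n.+1 | (k < m.+1)%N) Hf m k)%R); last first.
  by move=> m _; rewrite (big_ord_widen _ (fun k => Hf m k) (ltn_ord m)).
rewrite -[LHS](big_mkord xpredT (fun m => \sum_(k < n.+1 | (k < m.+1)%N) Hf m k)%R).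
rewrite big_rev_mkord subn0; apply: eq_bigr => i _.
rewrite big_mkcond; apply: eq_bigr => k _; rewrite subSS.
have hi : i <= n by have := ltn_ord i.
case: (leqP (i + k) n) => hik.
  have -> : k < (n - i).+1 by lia.
  rewrite /Hf /F /c subKn // bin_sub // -!mulrA mulr_natl mulnC.
  done.
by case: ltnP => // h; lia.
Qed.
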